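(* Let $r\ge2$, $n\ge2r$, and let $H\subseteq\binom{\Omega_n}{r}$ be $M_1^{(r)}$-saturated. Then there exist $\ell\ge1$ and distinct vertices $w_1,\dots,w_{2\ell+1}\in\Omega_n$ with $w_1<w_3<w_5<\dots<w_{2\ell+1}<w_2<w_4<\dots<w_{2\ell}<w_1$ (clockwise cyclic order) such that $\lambda(w_i)=w_{i+1}$ and $\rho(w_i)=w_{i-1}$ for all $i$, with indices taken mod $2\ell+1$.
   Context: $\Omega_n=\{v_0,\dots,v_{n-1}\}$ with cyclic order $v_0<\dots<v_{n-1}<v_0$, indices mod $n$. For distinct vertices $u,w$, $(u,w)$ is the set of vertices strictly between $u$ and $w$ moving clockwise from $u$ to $w$ and $[u,w]=(u,w)\cup\{u,w\}$. An $r$-cgh $H\subseteq\binom{\Omega_n}{r}$ is $M_1^{(r)}$-saturated if there are no edges $h_1,h_2\in H$ and vertices $u\neq u'$ with $h_1\subseteq[u,u']$ and $h_2\cap[u,u']=\emptyset$, but for every $e\in\binom{\Omega_n}{r}\setminus H$ such a pair exists in $H\cup\{e\}$. In such $H$ every vertex lies in an edge. $\lambda(v_i)$ is the vertex $u$ such that some $h\in H$ with $v_i\in h$ satisfies $h\subseteq[u,v_i]$, while no $h\in H$ with $v_i\in h$ satisfies $h\subseteq[u',v_i]$, $u'$ the clockwise successor of $u$. $\rho(v_i)$ is the vertex $u$ such that some $h\in H$ with $v_i\in h$ satisfies $h\subseteq[v_i,u]$ but none with $h\subseteq[v_i,u'']$, $u''$ the clockwise predecessor of $u$. *)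

(* Defs.v *)
From mathcomp Require Import all_boot.
Set Implicit Arguments. Unset Strict Implicit. Unset Printing Implicit Defensive.

(* Omega_n is 'I_n; clockwise successor of v_i is v_{i+1 mod n}. *)

(* Closed clockwise interval [u,w] = {u, u+1, ..., w} (indices mod n). *)
Definition cint (n : nat) (u w : 'I_n) : {set 'I_n} :=
  [set x : 'I_n | (x + n - u) %% n <= (w + n - u) %% n].

Definition csucc (n : nat) (u : 'I_n) : 'I_n := ordS u.
Definition cpred (n : nat) (u : 'I_n) : 'I_n := ord_pred u.

(* H contains a copy of M_1: h1 inside [u,u'], h2 disjoint from [u,u'] *)
Definition has_M1 (n : nat) (H : {set {set 'I_n}}) : Prop :=
  exists h1 h2 (u u' : 'I_n),
    [/\ h1 \in H, h2 \in H, u != u', h1 \subset cint u u'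
      & [disjoint h2 & cint u u']].

Definition M1_saturated (n r : nat) (H : {set {set 'I_n}}) : Prop :=
  ~ has_M1 H /\
  forall e : {set 'I_n}, #|e| = r -> e \notin H -> has_M1 (e |: H).

Definition is_lambda (n : nat) (H : {set {set 'I_n}}) (v u : 'I_n) : bool :=
  [exists h in H, (v \in h) && (h \subset cint u v)] &&
  ~~ [exists h in H, (v \in h) && (h \subset cint (csucc u) v)].

Definition is_rho (n : nat) (H : {set {set 'I_n}}) (v u : 'I_n) : bool :=
  [exists h in H, (v \in h) && (h \subset cint v u)] &&
  ~~ [exists h in H, (v \in h) && (h \subset cint v (cpred u))].

Definition lam (n : nat) (H : {set {set 'I_n}}) (v : 'I_n) : 'I_n :=
  odflt v [pick u | is_lambda H v u ].
Definition rho (n : nat) (H : {set {set 'I_n}}) (v : 'I_n) : 'I_n :=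
  odflt v [pick u | is_rho H v u ].

Definition cyc_ordered (n : nat) (s : seq 'I_n) : Prop :=
  exists k, sorted ltn (map val (rot k s)).

(* for w : 'I_(2l+1) -> 'I_n (w_1..w_{2l+1} of the paper are w 0 .. w 2l),
   the sequence w_1, w_3, ..., w_{2l+1}, w_2, w_4, ..., w_{2l} *)
Definition odd_even_seq (n l : nat) (w : 'I_(2 * l).+1 -> 'I_n) : seq 'I_n :=
  [seq w (inord (2 * j)) | j <- iota 0 l.+1] ++
  [seq w (inord (2 * j + 1)) | j <- iota 0 l].

(* Main.v *)
Require Import Defs.
From mathcomp Require Import all_boot zify.
Set Implicit Arguments. Unset Strict Implicit. Unset Printing Implicit Defensive.

Section Main.
Variable n' : nat.
Local Notation n := n'.+1.
Variable r : nat.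
Variable H : {set {set 'I_n}}.
Hypothesis r2 : 2 <= r.
Hypothesis rn : 2 * r <= n.
Hypothesis Hcard : forall h, h \in H -> #|h| = r.
Hypothesis Hsat : M1_saturated r H.

Ltac ifs := repeat match goal with |- context [if ?b then _ else _] =>
  lazymatch b with context [if _ then _ else _] => fail | _ =>
  let E := fresh "E" in case: (boolP b) => E end end.

Definition d (a x : 'I_n) : nat := (x + n - a) %% n.

Lemma dE a x : d a x = if a <= x then x - a else n + x - a.
Proof.
have ha := ltn_ord a; have hx := ltn_ord x.
rewrite /d; case: (leqP a x) => h.
- rewrite -addnBAC // modnDr modn_small //; lia.
- rewrite modn_small; lia.
Qed.

Lemma d_lt a x : d a x < n.
Proof. by rewrite /d ltn_pmod. Qed.

Lemma d_base z x y :
  d x y = if d z x <= d z y then d z y - d z x else n + d z y - d z x.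
Proof.
have := ltn_ord z; have := ltn_ord x; have := ltn_ord y.
rewrite !dE => *; ifs; lia.
Qed.

Lemma d_self a : d a a = 0.
Proof. by rewrite dE leqnn subnn. Qed.

Lemma d_eq0 a x : (d a x == 0) = (a == x).
Proof.
have := ltn_ord a; have := ltn_ord x.
rewrite dE; case: (eqVneq a x) => [->|]; first by rewrite leqnn subnn.
move=> ne ? ?; have ne' : (a : nat) != x by [].
move: ne'; ifs; move=> ne'; apply/eqP; lia.
Qed.

Lemma d_inj a : injective (d a).
Proof.
move=> x y; have := ltn_ord a; have := ltn_ord x; have := ltn_ord y.
rewrite !dE => ? ? ?; ifs; move=> *; apply: ord_inj; lia.
Qed.

Lemma d_injl x : injective (d ^~ x).
Proof.
move=> a b; have := ltn_ord a; have := ltn_ord x; have := ltn_ord b.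
rewrite /= !dE => ? ? ?; ifs; move=> *; apply: ord_inj; lia.
Qed.

Definition sh (x : 'I_n) (k : nat) : 'I_n := Ordinal (ltn_pmod (x + k) (ltn0Sn n')).

Lemma sh_sh x i j : sh (sh x i) j = sh x (i + j).
Proof. by apply: val_inj; rewrite /= modnDml addnA. Qed.

Lemma sh_n x : sh x n = x.
Proof. by apply: val_inj; rewrite /= modnDr modn_small. Qed.

Lemma sh0 x : sh x 0 = x.
Proof. by apply: val_inj; rewrite /= addn0 modn_small. Qed.

Lemma d_sh z x k : k <= n ->
  d z (sh x k) = if d z x + k < n then d z x + k else d z x + k - n.
Proof.
move=> kn; have hz := ltn_ord z; have hx := ltn_ord x.
have E : val (sh x k) = if x + k < n then x + k else x + k - n.
  rewrite /=; case: ltnP => h; first by rewrite modn_small.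
  rewrite -(subnK h) modnDr modn_small //; lia.
rewrite !dE E; ifs; lia.
Qed.

Lemma d_sh_self x k : k < n -> d x (sh x k) = k.
Proof. move=> kn; rewrite d_sh ?d_self //; [rewrite add0n kn // | exact: ltnW]. Qed.

Lemma sh_d c y : sh c (d c y) = y.
Proof. apply: (@d_inj c); rewrite d_sh_self // d_lt //. Qed.

Lemma csuccE x : csucc x = sh x 1.
Proof. by apply: val_inj; rewrite /= addn1. Qed.

Lemma cpredE x : cpred x = sh x n'.
Proof. by apply: val_inj; rewrite /= addnS. Qed.

Lemma cintE u u' : cint u u' = [set x | d u x <= d u u'].
Proof. by []. Qed.


Definition free (A : {set 'I_n}) := [forall h in H, ~~ (h \subset A)].

Lemma freeP (A : {set 'I_n}) : reflect (forall h, h \in H -> ~~ (h \subset A)) (free A).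
Proof. exact: (iffP forall_inP). Qed.

Lemma nfreeP (A : {set 'I_n}) : reflect (exists2 h, h \in H & h \subset A) (~~ free A).
Proof.
apply: (iffP idP).
- move/forall_inPn => [h hH]; rewrite negbK => hA; by exists h.
- move=> [h hH hA]; apply/forall_inPn; exists h => //; by rewrite negbK.
Qed.

Lemma free_sub (A B : {set 'I_n}) : A \subset B -> free B -> free A.
Proof.
move=> AB /freeP fB; apply/freeP => h hH; apply/negP => hA.
by move: (fB h hH); rewrite (subset_trans hA AB).
Qed.

Lemma card_le_sub h (A : {set 'I_n}) : h \in H -> h \subset A -> r <= #|A|.
Proof. move=> hH hA; rewrite -(Hcard hH); exact: subset_leq_card. Qed.

Lemma noM1 h1 h2 u u' : h1 \in H -> h2 \in H -> h1 \subset cint u u' ->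
  ~~ [disjoint h2 & cint u u'].
Proof.
move=> h1H h2H sub; apply/negP => dis.
case: (eqVneq u u') => [eu|ne].
- subst; have := card_le_sub h1H sub.
  have -> : cint u' u' = [set u'].
    by apply/setP => x; rewrite cintE !inE d_self leqn0 d_eq0 eq_sym.
  rewrite cards1; lia.
- apply: Hsat.1; exists h1, h2, u, u'; split => //.
Qed.

Lemma geo1 u u' a b : a \in cint u u' -> b \in cint u u' -> a != b ->
  (forall x, x \notin cint u u' -> 0 < d a x < d a b) \/
  (forall x, x \notin cint u u' -> d a b < d a x).
Proof.
rewrite !cintE !inE => ha hb ne.
have hne : d u a != d u b by apply: contra ne => /eqP /d_inj ->.
case: (leqP (d u a) (d u b)) => hab; [right|left] => x; rewrite inE -ltnNge => hx;
rewrite (d_base u a x) (d_base u a b); have := d_lt u x; have := d_lt u b; have := d_lt u a; ifs; lia.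
Qed.

Lemma geo2 u u' a b : a \notin cint u u' -> b \notin cint u u' -> a != b ->
  (forall x, x \in cint u u' -> 0 < d a x < d a b) \/
  (forall x, x \in cint u u' -> d a b < d a x).
Proof.
rewrite !cintE !inE -!ltnNge => ha hb ne.
have hne : d u a != d u b by apply: contra ne => /eqP /d_inj ->.
case: (leqP (d u a) (d u b)) => hab; [right|left] => x; rewrite inE => hx;
rewrite (d_base u a x) (d_base u a b); have := d_lt u x; have := d_lt u b; have := d_lt u a; ifs; lia.
Qed.

Definition arcF (a : 'I_n) k := [set x | d a x < k].

Lemma card_arc a k : k <= n -> #|arcF a k| = k.
Proof.
move=> kn.
pose f (x : 'I_n) := sh ord0 (d a x).
have finj : injective f.
  move=> x y /(congr1 val) /=; rewrite !add0n !modn_small ?d_lt // => /d_inj //.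
have -> : arcF a k = f @^-1: [set i : 'I_n | i < k].
  apply/setP => x; rewrite !inE /= add0n modn_small ?d_lt //.
rewrite card_preimset //.
have -> : [set i : 'I_n | i < k] = widen_ord kn @: [set: 'I_k].
  apply/setP => i; rewrite inE; apply/idP/imsetP => [ik|[j _ ->]]; last exact: ltn_ord j.
  by exists (Ordinal ik) => //; apply: ord_inj.
rewrite card_imset ?cardsT ?card_ord //.
by move=> x y /(congr1 val) /= /ord_inj.
Qed.

Lemma sh_d_sub c x k : d c x < k -> k <= n -> x \in arcF c k.
Proof. by rewrite inE. Qed.


Lemma free_contra g (O : {set 'I_n}) : g \in H -> free O -> g \subset O -> False.
Proof. by move=> gH /freeP /(_ g gH) /negP. Qed.

Lemma edge_lemma a b : a != b -> r <= (d a b).+1 ->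
  free [set x | 0 < d a x < d a b] -> free [set x | d a b < d a x] ->
  exists2 e, e \in H & [/\ a \in e, b \in e & e \subset [set x | d a x <= d a b]].
Proof.
move=> ne rab F1 F2.
have rn1 : r.-1 <= n by lia.
set e := b |: arcF a r.-1.
have bnot : b \notin arcF a r.-1 by rewrite inE -leqNgt; lia.
have ecard : #|e| = r by rewrite cardsU1 bnot card_arc //=; lia.
have ae : a \in e by rewrite !inE d_self; apply/orP; right; lia.
have be : b \in e by rewrite !inE eqxx.
have esub : e \subset [set x | d a x <= d a b].
  by apply/subsetP => x; rewrite !inE => /orP [/eqP ->|]; lia.
case: (boolP (e \in H)) => eH; first by exists e.
exfalso; have := Hsat.2 e ecard eH.
case=> h1 [h2 [u [u' [h1in h2in nuu sub dis]]]].
have dis' : forall x, x \in h2 -> x \notin cint u u'.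
  move=> x xh; move: dis; rewrite disjoint_subset => /subsetP /(_ x xh).
  by rewrite inE.
rewrite !in_setU1 in h1in h2in.
case/orP: h1in => [/eqP E1|h1H]; case/orP: h2in => [/eqP E2|h2H].
- subst h1 h2; by move: (dis' a ae); rewrite (subsetP sub a ae).
- subst h1.
  have acint := subsetP sub a ae; have bcint := subsetP sub b be.
  case: (geo1 acint bcint ne) => hh.
  + apply: (free_contra h2H F1); apply/subsetP => x xh; rewrite inE.
    exact: hh (dis' x xh).
  + apply: (free_contra h2H F2); apply/subsetP => x xh; rewrite inE.
    exact: hh (dis' x xh).
- subst h2.
  case: (geo2 (dis' a ae) (dis' b be) ne) => hh.
  + apply: (free_contra h1H F1); apply/subsetP => x xh; rewrite inE.
    exact: hh (subsetP sub x xh).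
  + apply: (free_contra h1H F2); apply/subsetP => x xh; rewrite inE.
    exact: hh (subsetP sub x xh).
- by move: (noM1 h1H h2H sub); rewrite dis.
Qed.


Lemma Hne : exists h, h \in H.
Proof.
set e := arcF ord0 r.
have ecard : #|e| = r by rewrite card_arc //; lia.
case: (boolP (e \in H)) => eH; first by exists e.
have := Hsat.2 e ecard eH.
case=> h1 [h2 [u [u' [h1in h2in nuu sub dis]]]].
rewrite !in_setU1 in h1in h2in.
case/orP: h1in => [/eqP E1|h1H]; last by exists h1.
case/orP: h2in => [/eqP E2|h2H]; last by exists h2.
subst h1 h2; have ae : ord0 \in e by rewrite inE d_self; lia.
exfalso; move: dis; rewrite disjoint_subset => /subsetP /(_ _ ae).
by rewrite inE (subsetP sub _ ae).
Qed.

Lemma nf_n a : ~~ free (arcF a n).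
Proof.
have [h hH] := Hne; apply/nfreeP; exists h => //.
by apply/subsetP => x _; rewrite inE d_lt.
Qed.

Lemma nf_ex a : exists k, ~~ free (arcF a k).
Proof. by exists n; apply: nf_n. Qed.

Definition D a := ex_minn (nf_ex a).

Lemma DP a k : (D a <= k) = ~~ free (arcF a k).
Proof.
rewrite /D; case: ex_minnP => m Hm Hmin.
apply/idP/idP => [mk|/Hmin //].
move: Hm; apply: contra => F; apply: (free_sub _ F).
by apply/subsetP => x; rewrite !inE => ?; lia.
Qed.

Lemma D_le_n a : D a <= n.
Proof. by rewrite DP nf_n. Qed.

Lemma D_ge a : r <= D a.
Proof.
have := DP a (D a); rewrite leqnn => /esym /nfreeP [h hH hsub].
by have := card_le_sub hH hsub; rewrite card_arc ?D_le_n.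
Qed.

Lemma EO1 a k : k <= n -> ~~ free (arcF a k) -> free [set x | k <= d a x].
Proof.
move=> kn /nfreeP [h1 h1H h1sub]; apply/freeP => h2 h2H; apply/negP => h2sub.
have k1 : 0 < k by have := card_le_sub h1H h1sub; rewrite card_arc //; lia.
have k1n : k.-1 < n by lia.
have sub1 : h1 \subset cint a (sh a k.-1).
  apply/subsetP => x xh; rewrite cintE inE d_sh_self //.
  by have := subsetP h1sub x xh; rewrite inE; lia.
have := noM1 h1H h2H sub1; rewrite disjoint_subset; apply/negP/negPn.
apply/subsetP => x xh; have := subsetP h2sub x xh.
by rewrite cintE !inE d_sh_self //; lia.
Qed.

Lemma both_free a k : k <= n -> r <= k -> free (arcF a k) ->
  free [set x | k <= d a x] -> False.
Proof.
move=> kn rk Fa Fc.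
have k1n : k.-1 < n by lia.
set b := sh a k.-1.
have dab : d a b = k.-1 by rewrite d_sh_self.
have ne : a != b by apply/eqP => E; move: dab; rewrite -E d_self; lia.
have p1 : r <= (d a b).+1 by rewrite dab; lia.
have p2 : free [set x | 0 < d a x < d a b].
  by apply: free_sub Fa; apply/subsetP => x; rewrite !inE dab; lia.
have p3 : free [set x | d a b < d a x].
  by apply: free_sub Fc; apply/subsetP => x; rewrite !inE dab; lia.
have [e eH [_ _ esub]] := edge_lemma ne p1 p2 p3.
apply: (free_contra eH Fa); apply: subset_trans esub _.
by apply/subsetP => x; rewrite !inE dab; lia.
Qed.

Lemma comp_arc a k : k <= n -> [set x | k <= d a x] = arcF (sh a k) (n - k).
Proof.
move=> kn; apply/setP => x; rewrite !inE (d_base a (sh a k) x) (d_sh a a kn) d_self add0n.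
have := d_lt a x; ifs; lia.
Qed.

Lemma arc_comp a k : k <= n -> [set x | n - k <= d (sh a k) x] = arcF a k.
Proof.
move=> kn; apply/setP => x; rewrite !inE (d_base a (sh a k) x) (d_sh a a kn) d_self add0n.
have := d_lt a x; ifs; lia.
Qed.

Lemma EO a k : k <= n -> (~~ free (arcF a k)) = free [set x | k <= d a x].
Proof.
move=> kn; apply/idP/idP => [/EO1 -> //|Fc]; apply/negP => Fa.
case: (leqP r k) => rk; first exact: (both_free kn rk Fa Fc).
have kn' : n - k <= n by lia.
apply: (@both_free (sh a k) (n - k) kn'); first by lia.
- by rewrite -comp_arc.
- by rewrite arc_comp.
Qed.

Lemma Gal a k : k <= n -> (D a <= k) = (n - k < D (sh a k)).
Proof. move=> kn; by rewrite DP EO // comp_arc // ltnNge DP negbK. Qed.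

Lemma D_le a : D a <= n - r + 1.
Proof.
have h : n - r + 1 <= n by lia.
rewrite Gal //; have := D_ge (sh a (n - r + 1)); lia.
Qed.

Lemma Dmono a : (D a).-1 <= D (sh a 1).
Proof.
set J := D (sh a 1).
have J1 : J <= n - r + 1 := D_le _.
have hJ : J <= n by lia.
have hJ1 : J.+1 <= n by lia.
have g1 := Gal (sh a 1) hJ; rewrite leqnn sh_sh add1n in g1.
have g2 := Gal a hJ1.
case: (leqP (D a).-1 J) => // hlt.
move: g2; rewrite (_ : (D a <= J.+1) = false); last by apply/negbTE; rewrite -ltnNge; lia.
move=> g2; lia.
Qed.


Lemma D_lt a : D a < n.
Proof. have := D_le a; lia. Qed.

Lemma D_free a k : k < D a -> free (arcF a k).
Proof. by move=> h; apply/negPn; rewrite -DP -ltnNge. Qed.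

Lemma D_nfree a : ~~ free (arcF a (D a)).
Proof. by rewrite -DP. Qed.

Lemma rho_ex v : is_rho H v (sh v (D v).-1).
Proof.
set u0 := sh v (D v).-1.
have Dr := D_ge v; have Dl := D_lt v.
have du : d v u0 = (D v).-1 by rewrite d_sh_self //; lia.
apply/andP; split.
- have ne : v != u0 by apply/eqP => E; move: du; rewrite -E d_self; lia.
  have p1 : r <= (d v u0).+1 by rewrite du; lia.
  have p2 : free [set x | 0 < d v x < d v u0].
    apply: (free_sub _ (D_free (_ : (D v).-1 < D v))); last by lia.
    by apply/subsetP => x; rewrite !inE du; lia.
  have p3 : free [set x | d v u0 < d v x].
    apply: (free_sub _ (EO1 (ltnW Dl) (D_nfree v))).
    by apply/subsetP => x; rewrite !inE du; lia.
  have [e eH [ve _ esub]] := edge_lemma ne p1 p2 p3.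
  by apply/exists_inP; exists e => //; rewrite ve cintE.
- apply/negP => /exists_inP [h hH /andP [vh hsub]].
  apply: (free_contra hH (D_free (_ : (D v).-1 < D v))); first by lia.
  apply: subset_trans hsub _; apply/subsetP => x.
  rewrite cintE cpredE !inE (d_sh v u0 (_ : n' <= n)) // du.
  have := d_lt v x; ifs; lia.
Qed.

Lemma rho_spec v u : is_rho H v u -> u = sh v (D v).-1.
Proof.
have Dr := D_ge v; have Dl := D_lt v.
set u0 := sh v (D v).-1.
have du : d v u0 = (D v).-1 by rewrite d_sh_self //; lia.
case/andP => /exists_inP [h1 h1H /andP [vh1 h1sub]] /exists_inP Hno.
apply: (@d_inj v); rewrite du.
have t1 : D v <= (d v u).+1.
  rewrite DP; apply/nfreeP; exists h1 => //; apply: subset_trans h1sub _.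
have uv : u != v.
  by apply/eqP => E; move: t1; rewrite E d_self; lia.
case: (leqP (d v u) (D v).-1) => hlt; first by lia.
exfalso.
have := rho_ex v; case/andP => /exists_inP [e eH /andP [ve esub]] _.
apply: Hno; exists e => //; rewrite ve /=; apply: subset_trans esub _.
apply/subsetP => x; rewrite !cintE !inE du cpredE (d_sh v u (_ : n' <= n)) //.
have := d_lt v u; have : d v u != 0 by rewrite d_eq0 eq_sym.
ifs; lia.
Qed.

Lemma rhoE v : rho H v = sh v (D v).-1.
Proof.
rewrite /rho; case: pickP => [u Hu|Hn]; first by rewrite /= (rho_spec Hu).
by move: (Hn (sh v (D v).-1)); rewrite rho_ex.
Qed.


Lemma n_gt1 : 1 < n.
Proof. lia. Qed.

Lemma d_back v : d (sh v 1) v = n.-1.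
Proof.
have := n_gt1 => h.
rewrite (d_base v (sh v 1) v) d_sh_self // d_self; ifs; lia.
Qed.

Lemma cint_b u v : cint u v = [set x | d (sh v 1) u <= d (sh v 1) x].
Proof.
apply/setP => x; rewrite cintE !inE (d_base (sh v 1) u x) (d_base (sh v 1) u v) d_back.
have := d_lt (sh v 1) x; have := d_lt (sh v 1) u; ifs; lia.
Qed.

Lemma lam_ex v : is_lambda H v (sh (sh v 1) (D (sh v 1)).-1).
Proof.
set b := sh v 1; set J := D b; set u0 := sh b J.-1.
have Jr : r <= J := D_ge b; have Jl : J <= n - r + 1 := D_le b.
have dbu : d b u0 = J.-1 by rewrite d_sh_self //; lia.
have dbv : d b v = n.-1 := d_back v.
have Jn : J <= n by lia.
have JJ : J.-1 < J by lia.
apply/andP; split.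
- have duv : d u0 v = n - J by rewrite (d_base b u0 v) dbu dbv; ifs; lia.
  have ne : u0 != v by apply/eqP => E; move: duv; rewrite E d_self; lia.
  have p1 : r <= (d u0 v).+1 by rewrite duv; lia.
  have p2 : free [set x | 0 < d u0 x < d u0 v].
    apply: (free_sub _ (EO1 Jn (D_nfree b))).
    apply/subsetP => x; rewrite !inE duv (d_base b u0 x) dbu.
    have := d_lt b x; ifs; lia.
  have p3 : free [set x | d u0 v < d u0 x].
    apply: (free_sub _ (D_free JJ)).
    apply/subsetP => x; rewrite !inE duv (d_base b u0 x) dbu.
    have := d_lt b x; ifs; lia.
  have [e eH [_ ve esub]] := edge_lemma ne p1 p2 p3.
  by apply/exists_inP; exists e => //; rewrite ve cintE.
- apply/negP => /exists_inP [h hH /andP [vh hsub]].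
  apply: (free_contra hH (EO1 Jn (D_nfree b))).
  apply: subset_trans hsub _; apply/subsetP => x.
  rewrite csuccE sh_sh cint_b -/b !inE d_sh_self; last by lia.
  lia.
Qed.

Lemma lam_spec v u : is_lambda H v u -> u = sh (sh v 1) (D (sh v 1)).-1.
Proof.
set b := sh v 1; set J := D b; set u0 := sh b J.-1.
have Jr : r <= J := D_ge b; have Jl : J <= n - r + 1 := D_le b.
have dbu : d b u0 = J.-1 by rewrite d_sh_self //; lia.
case/andP => /exists_inP [h1 h1H /andP [vh1 h1sub]] /exists_inP Hno.
rewrite cint_b -/b in h1sub.
have hp : d b u < J.
  have : ~~ free [set x | d b u <= d b x] by apply/nfreeP; exists h1.
  by rewrite -EO ?(ltnW (d_lt _ _)) // negbK ltnNge DP negbK.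
apply: (@d_inj b); rewrite dbu.
case: (leqP J.-1 (d b u)) => hq; first by lia.
exfalso.
have := lam_ex v; case/andP => /exists_inP [e eH /andP [ve esub]] _.
apply: Hno; exists e => //; rewrite ve /=; apply: subset_trans esub _.
have h1n : 1 <= n by lia.
rewrite !cint_b -/b -/J -/u0 csuccE (d_sh b u h1n) dbu.
apply/subsetP => x; rewrite !inE; ifs; lia.
Qed.

Lemma lamE v : lam H v = sh (sh v 1) (D (sh v 1)).-1.
Proof.
rewrite /lam; case: pickP => [u Hu|Hn]; first by rewrite /= (lam_spec Hu).
by move: (Hn (sh (sh v 1) (D (sh v 1)).-1)); rewrite lam_ex.
Qed.


Lemma lamE' v : lam H v = sh v (D (sh v 1)).
Proof.
rewrite lamE sh_sh; congr (sh v _); have := D_ge (sh v 1); lia.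
Qed.

Definition C := [set c | D c <= D (sh c 1)].

Lemma lamD c : c \in C -> D (lam H c) = n - D (sh c 1) + 1.
Proof.
rewrite inE lamE' => hc.
set J := D (sh c 1).
have Jr : r <= J := D_ge _; have Jl : J <= n - r + 1 := D_le _.
have k1 : J.-1 <= n by lia.
have k2 : J <= n by lia.
have g1 := Gal (sh c 1) k1; rewrite sh_sh (_ : 1 + J.-1 = J) in g1; last by lia.
rewrite (_ : (J <= J.-1) = false) in g1; last by apply/negbTE; rewrite -ltnNge; lia.
have g2 := Gal c k2; rewrite hc in g2.
lia.
Qed.

Lemma K3 c : c \in C -> rho H (lam H c) = c.
Proof.
move=> hc; rewrite rhoE (lamD hc) lamE' sh_sh.
have Jr := D_ge (sh c 1); have Jl := D_le (sh c 1).
rewrite (_ : _ + _ = n) ?sh_n //; lia.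
Qed.

Lemma K1 c : c \in C -> lam H c \in C.
Proof.
move=> hc; rewrite [X in X \in C]lamE' inE -lamE' (lamD hc) lamE' sh_sh.
set J := D (sh c 1).
have Jr : r <= J := D_ge _; have Jl : J <= n - r + 1 := D_le _.
have k2 : J <= n by lia.
have g := Gal (sh c 1) k2; rewrite leqnn sh_sh add1n in g.
rewrite !addn1; lia.
Qed.

Lemma lam_neq c : lam H c != c.
Proof.
rewrite lamE'; apply/eqP => E.
have Jr := D_ge (sh c 1); have Jl := D_lt (sh c 1).
have := d_sh_self c Jl; rewrite E d_self; lia.
Qed.

Lemma C_ne : exists c, c \in C.
Proof.
case: (set_0Vmem C) => [C0|[c cC]]; last by exists c.
exfalso.
have step : forall i, D (sh ord0 i) + i <= D ord0.
  elim=> [|i IH]; first by rewrite sh0 addn0.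
  have : sh ord0 i \notin C by rewrite C0 inE.
  rewrite inE sh_sh addn1 -ltnNge => h; lia.
by have := step n; rewrite sh_n; lia.
Qed.

Lemma K2 c : c \in C ->
  [/\ lam H (lam H c) \in C, lam H (lam H c) != c &
      forall y, y \in C -> ~~ (0 < d c y < d c (lam H (lam H c)))].
Proof.
move=> hc.
have ex : exists g, (0 < g) && (sh c g \in C) by exists n; rewrite sh_n hc.
set J := D (sh c 1).
have Jr : r <= J := D_ge _; have Jl : J <= n - r + 1 := D_le _.
case: (ex_minnP ex) => g /andP [g0 gC] gmin.
have Dstep : forall i, 0 < i <= g -> D (sh c i) + i = J + 1.
  elim=> [|i IH] //; case: (posnP i) => [->|ipos] ig; first by [].
  have IH' := IH (ltac:(lia)).
  have nC : sh c i \notin C.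
    by apply/negP => iC; have := gmin i; rewrite ipos iC /= => /(_ isT); lia.
  move: nC; rewrite inE sh_sh addn1 -ltnNge => h.
  have := Dmono (sh c i); rewrite sh_sh addn1; lia.
set K := D (sh c g).
have HK : K + g = J + 1 := Dstep g (ltac:(lia)).
have Kr : r <= K := D_ge _.
have gJ : g <= J.-1 by lia.
have gn : g < n by lia.
have Kn : K <= n by lia.
have K1n : K.-1 <= n by lia.
have g1 := Gal (sh c g) Kn; rewrite leqnn sh_sh (_ : g + K = J.+1) in g1; last by lia.
have g2 := Gal (sh c g.+1) K1n; rewrite sh_sh (_ : g.+1 + K.-1 = J.+1) in g2; last by lia.
move: gC; rewrite inE sh_sh addn1 -/K => gC.
rewrite (_ : (D (sh c g.+1) <= K.-1) = false) in g2; last by apply/negbTE; rewrite -ltnNge; lia.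
have DJ : D (sh c J.+1) = n - K + 1 by lia.
have tE : lam H (lam H c) = sh c g.
  rewrite [lam H c]lamE' -/J lamE' !sh_sh addn1 DJ.
  rewrite (_ : J + (n - K + 1) = g + n); last by lia.
  by rewrite -sh_sh sh_n.
rewrite tE; split.
- by rewrite inE sh_sh addn1.
- apply/eqP => E; have := d_sh_self c gn; rewrite E d_self; lia.
- move=> y yC; rewrite d_sh_self //; apply/negP => /andP [y0 yg].
  have := gmin (d c y); rewrite y0 sh_d yC /= => /(_ isT); lia.
Qed.


Definition toI (x : nat) : 'I_n := sh ord0 x.

Lemma val_toI x : x < n -> nat_of_ord (toI x) = x.
Proof. by move=> xn; rewrite /= add0n modn_small. Qed.

Lemma toI_val (c : 'I_n) : toI (nat_of_ord c) = c.
Proof. by apply: val_inj; rewrite /= add0n modn_small. Qed.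

Definition sq := [seq x <- iota 0 n | toI x \in C].
Definition m := size sq.

Lemma sq_sorted : sorted ltn sq.
Proof. exact: (sorted_filter ltn_trans _ (iota_ltn_sorted 0 n)). Qed.

Lemma sq_uniq : uniq sq.
Proof. exact: (sorted_uniq ltn_trans ltnn sq_sorted). Qed.

Lemma sq_mem x : (x \in sq) = (x < n) && (toI x \in C).
Proof. by rewrite mem_filter mem_iota add0n andbC. Qed.

Lemma memC (c : 'I_n) : (nat_of_ord c \in sq) = (c \in C).
Proof. by rewrite sq_mem ltn_ord toI_val. Qed.

Definition E k := toI (nth 0 sq k).

Lemma nth_lt k : k < m -> nth 0 sq k < n.
Proof. by move=> km; have := mem_nth 0 km; rewrite sq_mem => /andP []. Qed.

Lemma E_C k : k < m -> E k \in C.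
Proof. by move=> km; have := mem_nth 0 km; rewrite sq_mem => /andP []. Qed.

Lemma valE k : k < m -> nat_of_ord (E k) = nth 0 sq k.
Proof. by move=> km; rewrite val_toI // nth_lt. Qed.

Definition idx (c : 'I_n) := index (nat_of_ord c) sq.

Lemma idx_lt c : c \in C -> idx c < m.
Proof. by move=> cC; rewrite /idx index_mem memC. Qed.

Lemma E_idx c : c \in C -> E (idx c) = c.
Proof. by move=> cC; rewrite /E /idx nth_index ?memC // toI_val. Qed.

Lemma idx_E k : k < m -> idx (E k) = k.
Proof. by move=> km; rewrite /idx valE // index_uniq // sq_uniq. Qed.

Lemma sq_lt i j : i < j -> j < m -> nth 0 sq i < nth 0 sq j.
Proof.
move=> ij jm; apply: (sorted_ltn_nth ltn_trans 0 sq_sorted) => //; rewrite inE //.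
exact: ltn_trans ij jm.
Qed.

Lemma next_idx c t : c \in C -> t \in C -> t != c ->
  (forall y, y \in C -> ~~ (0 < d c y < d c t)) -> idx t = (idx c).+1 %% m.
Proof.
move=> cC tC tc Hno.
have im := idx_lt cC; have jm := idx_lt tC.
have ci : nth 0 sq (idx c) = c by rewrite -valE ?E_idx.
have tj : nth 0 sq (idx t) = t by rewrite -valE ?E_idx.
have Hy : forall k, k < m -> ~~ (0 < d c (E k) < d c t) by move=> k km; apply: Hno; apply: E_C.
have dv : forall k, k < m -> d c (E k) = if c <= nth 0 sq k then nth 0 sq k - c else n + nth 0 sq k - c.
  by move=> k km; rewrite dE valE.
have dt : d c t = if (c : nat) <= t then t - c else n + t - c by rewrite dE.
have ij : idx c != idx t.
  by apply: contra tc => /eqP E1; rewrite -(E_idx tC) -E1 E_idx.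
have ct : (c : nat) != t by apply: contra tc => /eqP /ord_inj ->.
case: (ltngtP (idx c) (idx t)) ij => // hij _.
- case: (ltnP (idx c).+1 (idx t)) => h.
  + have h' : (idx c).+1 < m by lia.
    have := Hy _ h'; rewrite dv // dt.
    have := @sq_lt (idx c) (idx c).+1 (ltnSn _) h'.
    have := @sq_lt (idx c).+1 (idx t) h jm.
    rewrite ci tj; ifs; lia.
  + have e1 : idx t = (idx c).+1 by lia.
    by rewrite e1 modn_small // -e1.
- case: (ltnP (idx c).+1 m) => h.
  + have := Hy _ h; rewrite dv // dt.
    have := @sq_lt (idx c) (idx c).+1 (ltnSn _) h.
    have := @sq_lt (idx t) (idx c) hij im.
    have := nth_lt h.
    rewrite ci tj; ifs; lia.
  + have e1 : (idx c).+1 = m by lia.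
    rewrite e1 modnn.
    case: (posnP (idx t)) => // h0.
    have m0 : 0 < m by lia.
    have := Hy _ m0; rewrite dv // dt.
    have := @sq_lt 0 (idx t) h0 jm.
    have := @sq_lt (idx t) (idx c) hij im.
    rewrite ci tj; have := ltn_ord c; ifs; lia.
Qed.

Definition pi k := idx (lam H (E k)).

Lemma pi_lt k : k < m -> pi k < m.
Proof. by move=> km; apply: idx_lt; apply: K1; apply: E_C. Qed.

Lemma E_pi k : k < m -> E (pi k) = lam H (E k).
Proof. by move=> km; rewrite E_idx //; apply: K1; apply: E_C. Qed.

Lemma pipi k : k < m -> pi (pi k) = k.+1 %% m.
Proof.
move=> km; rewrite /pi (E_pi km).
have [h1 h2 h3] := K2 (E_C km).
by rewrite (next_idx (E_C km) h1 h2 h3) idx_E.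
Qed.

Lemma pi_lin k : k < m -> pi k = (pi 0 + k) %% m.
Proof.
elim: k => [|k IH] km; first by rewrite addn0 modn_small // pi_lt //; lia.
have km' : k < m by lia.
have e1 : pi (pi k) = k.+1 by rewrite pipi // modn_small.
rewrite -{1}e1 pipi ?pi_lt // IH //.
by rewrite addnS -addn1 modnDml addn1.
Qed.


Lemma m_facts : exists l, [/\ m = (2 * l).+1, 1 <= l & pi 0 = l.+1].
Proof.
have [c cC] := C_ne.
have m0 : 0 < m by have := idx_lt cC; lia.
have pm : pi 0 < m := pi_lt m0.
have m2 : 1 < m.
  case: (ltnP 1 m) => // m1.
  have p0 : pi 0 = 0 by lia.
  have := lam_neq (E 0); rewrite -(E_pi m0) p0 eqxx //.
have h1 : pi (pi 0) = 1 by rewrite pipi // modn_small.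
have h2 : pi (pi 0) = (pi 0 + pi 0) %% m := pi_lin pm.
have hpp : pi 0 + pi 0 = m.+1.
  case: (ltnP (pi 0 + pi 0) m) => h.
  - rewrite modn_small // in h2; lia.
  - have : (pi 0 + pi 0) %% m = pi 0 + pi 0 - m.
      rewrite -{1}(subnK h) modnDr modn_small //; lia.
    lia.
exists (pi 0).-1; split; lia.
Qed.

Theorem main : exists (l : nat) (w : 'I_(2 * l).+1 -> 'I_n),
    [/\ 1 <= l, injective w,
        cyc_ordered (odd_even_seq w),
        (forall i, lam H (w i) = w (ordS i))
      & (forall i, rho H (w i) = w (ord_pred i))].
Proof.
have [l [hm l1 hp]] := m_facts.
pose w (i : 'I_(2 * l).+1) := E ((i * l.+1) %% m).
have m0 : 0 < m by lia.
have wC : forall i, w i \in C by move=> i; apply: E_C; rewrite ltn_pmod.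
have key : forall q, q < m -> lam H (E q) = E ((l.+1 + q) %% m).
  by move=> q qm; rewrite -E_pi // pi_lin // hp.
have lamw : forall i, lam H (w i) = w (ordS i).
  move=> i; rewrite /w key ?ltn_pmod //; congr E.
  have e : i.+1 %% (2 * l).+1 = i.+1 %% m by rewrite hm.
  by rewrite /= e modnDmr modnMml (mulSn i l.+1).
exists l, w; split => //.
- move=> i j /(congr1 idx); rewrite !idx_E ?ltn_pmod // => eq.
  apply: ord_inj.
  have : (i * l.+1 * 2) %% m = (j * l.+1 * 2) %% m by rewrite -modnMml eq modnMml.
  rewrite -!mulnA (_ : l.+1 * 2 = m + 1); last by lia.
  rewrite !mulnDr !muln1 !modnMDl !modn_small // hm; exact: ltn_ord.
- exists 0; rewrite rot0.
  suff -> : [seq val i | i <- odd_even_seq w] = sq by exact: sq_sorted.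
  rewrite -(mkseq_nth 0 sq) /mkseq -/m hm (_ : (2 * l).+1 = l.+1 + l); last by lia.
  rewrite iotaD add0n -{2}(addn0 l.+1) iotaDl /odd_even_seq !map_cat -!map_comp.
  congr (_ ++ _); apply/eq_in_map => j; rewrite mem_iota => /andP [_ jl] /=.
  + rewrite /w inordK; last by lia.
    rewrite (_ : 2 * j * l.+1 = j * m + j); last by rewrite hm; lia.
    have jm : j < m by lia.
    rewrite modnMDl (modn_small jm) /= add0n modn_small //; exact: nth_lt.
  + rewrite /w inordK; last by lia.
    rewrite (_ : (2 * j + 1) * l.+1 = j * m + (l.+1 + j)); last by rewrite hm; lia.
    have jm : l.+1 + j < m by lia.
    rewrite modnMDl (modn_small jm) /= add0n modn_small //; exact: nth_lt.
- by move=> i; rewrite -{1}(ord_predK i) -lamw K3.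
Qed.

End Main.

Theorem lemma3p6 (r n : nat) (H : {set {set 'I_n}}) :
  2 <= r -> 2 * r <= n ->
  (forall h, h \in H -> #|h| = r) ->
  M1_saturated r H ->
  exists (l : nat) (w : 'I_(2 * l).+1 -> 'I_n),
    [/\ 1 <= l, injective w,
        cyc_ordered (odd_even_seq w),
        (forall i, lam H (w i) = w (ordS i))
      & (forall i, rho H (w i) = w (ord_pred i))].
Proof.
case: n H => [|n'] H r2 rn Hc Hs; first by exfalso; lia.
exact: (main r2 rn Hc Hs).
Qed.
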